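(* Let $f:\mathbb{R}^N\to[0,\infty)$ be symmetrizable, $f(x)=\phi(h(x'),x_N)$, let $K$ be the Wulff shape of $f$ and $K_h\subset\mathbb{R}^{N-1}$ the Wulff shape of $h$. Then there exists $\alpha:\mathbb{R}\to[0,\infty)$, concave on $\{t:\alpha(t)>0\}$, such that (i) $K_t=\emptyset$ for every $t$ with $\alpha(t)=0$, and (ii) $K_t=\alpha(t)K_h$ for every $t$ with $\alpha(t)\neq 0$. Conversely, let $f:\mathbb{R}^N\to[0,\infty)$ be lower-semicontinuous, convex, positively $1$-homogeneous with $f(x)>0$ for $x\neq 0$, and suppose there exist an open convex set $K_h\subset\mathbb{R}^{N-1}$ and a function $\alpha:\mathbb{R}\to[0,\infty)$, concave on $\{t:\alpha(t)>0\}$, such that the Wulff shape $K$ of $f$ satisfies (i) and (ii). Then $f$ is symmetrizable.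
   Context: Let $N\ge 2$ and write $x=(x',x_N)\in\mathbb{R}^{N-1}\times\mathbb{R}$. For $E\subset\mathbb{R}^N$ and $t\in\mathbb{R}$, $E_t:=\{x'\in\mathbb{R}^{N-1}:(x',t)\in E\}$. For a convex, positively $1$-homogeneous $g:\mathbb{R}^k\to[0,\infty)$ with $g(y)>0$ for $y\neq0$, its Wulff shape is $K_g:=\bigcap_{\nu\in S^{k-1}}\{y\in\mathbb{R}^k:y\cdot\nu<g(\nu)\}$. A convex, positively $1$-homogeneous $f:\mathbb{R}^N\to[0,\infty)$ with $f(x)>0$ for $x\ne0$ is called symmetrizable if there exist lower-semicontinuous functions $h:\mathbb{R}^{N-1}\to[0,\infty)$ and $\phi:[0,\infty)\times\mathbb{R}\to[0,\infty)$ such that $h$ is positively $1$-homogeneous, convex, with $h(x')>0$ for $x'\neq0$, $\phi$ is convex, and $f(x)=\phi(h(x'),x_N)$ for all $x\in\mathbb{R}^N$. *)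

(* Defs.v *)
From Stdlib Require Import Reals.
From mathcomp Require Import all_boot.
Set Implicit Arguments.
Unset Strict Implicit.

Local Open Scope R_scope.

Definition vec (k : nat) := 'I_k -> R.

Definition vadd k (x y : vec k) : vec k := fun i => x i + y i.
Definition vscal k (a : R) (x : vec k) : vec k := fun i => a * x i.
Definition vsub k (x y : vec k) : vec k := fun i => x i - y i.
Definition vzero k : vec k := fun _ => 0.

Definition dot k (x y : vec k) : R := \big[Rplus/0]_(i < k) (x i * y i).
Definition vnorm k (x : vec k) : R := sqrt (dot x x).

Definition unit_sphere k (nu : vec k) : Prop := dot nu nu = 1.

Definition nonneg_fun k (g : vec k -> R) : Prop := forall y, 0 <= g y.

Definition convex_fun k (g : vec k -> R) : Prop :=
  forall (x y : vec k) (l : R), 0 <= l <= 1 ->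
    g (vadd (vscal l x) (vscal (1 - l) y)) <= l * g x + (1 - l) * g y.

Definition pos_homogeneous k (g : vec k -> R) : Prop :=
  forall (t : R) (x : vec k), 0 < t -> g (vscal t x) = t * g x.

Definition positive_off_zero k (g : vec k -> R) : Prop :=
  forall x : vec k, x <> @vzero k -> 0 < g x.

Definition lsc_fun k (g : vec k -> R) : Prop :=
  forall (x : vec k) (eps : R), 0 < eps ->
    exists delta, 0 < delta /\
      forall y, vnorm (vsub y x) < delta -> g x - eps < g y.

(* Functions phi : [0,oo) x R -> R, modelled as R -> R -> R restricted to s >= 0 *)
Definition nonneg_fun2 (phi : R -> R -> R) : Prop :=
  forall s t, 0 <= s -> 0 <= phi s t.

Definition convex_fun2 (phi : R -> R -> R) : Prop :=
  forall s1 t1 s2 t2 l, 0 <= s1 -> 0 <= s2 -> 0 <= l <= 1 ->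
    phi (l * s1 + (1 - l) * s2) (l * t1 + (1 - l) * t2)
      <= l * phi s1 t1 + (1 - l) * phi s2 t2.

Definition lsc_fun2 (phi : R -> R -> R) : Prop :=
  forall s t eps, 0 <= s -> 0 < eps ->
    exists delta, 0 < delta /\
      forall s' t', 0 <= s' -> Rabs (s' - s) < delta -> Rabs (t' - t) < delta ->
        phi s t - eps < phi s' t'.

Definition Wulff k (g : vec k -> R) (y : vec k) : Prop :=
  forall nu : vec k, unit_sphere nu -> dot y nu < g nu.

(* Splitting R^(n+1) = R^n x R : x = (x', x_N) *)
Definition xprime n (x : vec n.+1) : vec n :=
  fun j => x (widen_ord (leqnSn n) j).
Definition xlast n (x : vec n.+1) : R := x ord_max.
Definition join n (x' : vec n) (t : R) : vec n.+1 :=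
  fun i => match (insub (val i) : option 'I_n) with
           | Some j => x' j
           | None => t
           end.

Definition slice n (E : vec n.+1 -> Prop) (t : R) (x' : vec n) : Prop :=
  E (join x' t).

Definition open_vset k (A : vec k -> Prop) : Prop :=
  forall y, A y -> exists r, 0 < r /\ forall z, vnorm (vsub z y) < r -> A z.
Definition convex_vset k (A : vec k -> Prop) : Prop :=
  forall x y l, A x -> A y -> 0 <= l <= 1 -> A (vadd (vscal l x) (vscal (1 - l) y)).

Definition concave_on_pos (alpha : R -> R) : Prop :=
  forall s t l, 0 < alpha s -> 0 < alpha t -> 0 <= l <= 1 ->
    l * alpha s + (1 - l) * alpha t <= alpha (l * s + (1 - l) * t).

Definition symmetrizable n (f : vec n.+1 -> R) : Prop :=
  nonneg_fun f /\ convex_fun f /\ pos_homogeneous f /\ positive_off_zero f /\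
  exists (h : vec n -> R) (phi : R -> R -> R),
    lsc_fun h /\ nonneg_fun h /\ pos_homogeneous h /\ convex_fun h /\
    positive_off_zero h /\
    lsc_fun2 phi /\ nonneg_fun2 phi /\ convex_fun2 phi /\
    forall x : vec n.+1, f x = phi (h (xprime x)) (xlast x).

Definition slices_scaled n (K : vec n.+1 -> Prop) (Kh : vec n -> Prop)
    (alpha : R -> R) : Prop :=
  (forall t, alpha t = 0 -> forall x', ~ slice K t x') /\
  (forall t, alpha t <> 0 -> forall x',
      slice K t x' <-> exists y, Kh y /\ x' = vscal (alpha t) y).

(* Main.v *)
Require Import Defs.
From Stdlib Require Import Reals Lra Classical ClassicalEpsilon FunctionalExtensionality.
From mathcomp Require Import all_boot.
From HB Require Import structures.
Set Warnings "-redundant-canonical-projection,-notation-overridden".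
Set Implicit Arguments.
Unset Strict Implicit.
Open Scope R_scope.
HB.instance Definition _ := Monoid.isComLaw.Build R 0 Rplus (fun a b c => esym (Rplus_assoc a b c)) Rplus_comm Rplus_0_l.

Lemma le_eps (a b : R) : (forall e, 0 < e -> a <= b + e) -> a <= b.
Proof.
intros H. destruct (Rle_or_lt a b) as [|Hl]; auto.
specialize (H ((a - b)/2)). lra.
Qed.

Lemma dot_scal_l k a (x y : vec k) : dot (vscal a x) y = a * dot x y.
Proof.
unfold dot, vscal. elim/big_rec2: _ => [|i u v _ ->]; ring.
Qed.

Lemma dot_comm k (x y : vec k) : dot x y = dot y x.
Proof. unfold dot. apply: eq_bigr => i _; ring. Qed.

Lemma dot_scal_r k a (x y : vec k) : dot x (vscal a y) = a * dot x y.
Proof. by rewrite dot_comm dot_scal_l dot_comm. Qed.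

Lemma dot_add_l k (x y z : vec k) : dot (vadd x y) z = dot x z + dot y z.
Proof.
unfold dot, vadd. elim/big_rec3: _ => [|i u v w _ ->]; ring.
Qed.

Lemma dot_add_r k (x y z : vec k) : dot z (vadd x y) = dot z x + dot z y.
Proof. by rewrite dot_comm dot_add_l !(dot_comm z). Qed.

Lemma dot_zero_l k (x : vec k) : dot (@vzero k) x = 0.
Proof. unfold dot, vzero. elim/big_rec: _ => [|i u _ ->]; ring. Qed.

Lemma dot_zero_r k (x : vec k) : dot x (@vzero k) = 0.
Proof. by rewrite dot_comm dot_zero_l. Qed.

Lemma dot_self_ge0 k (x : vec k) : 0 <= dot x x.
Proof.
unfold dot. elim/big_rec: _ => [|i u _ H]. lra.
pose proof (Rle_0_sqr (x i)). unfold Rsqr in *. lra.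
Qed.

Lemma nz_coord k (x : vec k) : x <> @vzero k -> exists i, x i <> 0.
Proof.
intros H. apply NNPP. intro H2. apply H. apply functional_extensionality => i.
apply NNPP => H3. apply H2. exists i. exact H3.
Qed.

Lemma dot_self_pos k (x : vec k) : x <> @vzero k -> 0 < dot x x.
Proof.
intros H. destruct (nz_coord H) as [i Hi].
unfold dot. rewrite (bigD1 i) //=.
apply Rplus_lt_le_0_compat.
 pose proof (Rsqr_pos_lt _ Hi). unfold Rsqr in *. lra.
elim/big_rec: _ => [|j u _ Hu]. lra.
pose proof (Rle_0_sqr (x j)). unfold Rsqr in *. lra.
Qed.

Lemma dot_self_zero_inv k (x : vec k) : dot x x = 0 -> x = @vzero k.
Proof.
intros H. apply NNPP => H2. pose proof (dot_self_pos H2). lra.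
Qed.

Lemma Wulff_iff k (g : vec k -> R) (y : vec k) :
  pos_homogeneous g ->
  (Wulff g y <-> forall nu, nu <> @vzero k -> dot y nu < g nu).
Proof.
intros Hg. split.
- intros HW nu Hnu. pose proof (dot_self_pos Hnu) as Hp.
  set r := sqrt (dot nu nu).
  have Hr: 0 < r by apply sqrt_lt_R0.
  have Hu: unit_sphere (vscal (/ r) nu).
    unfold unit_sphere. rewrite dot_scal_l dot_scal_r.
    have: r * r = dot nu nu by apply sqrt_sqrt; lra.
    intros E. field_simplify_eq; [lra | lra].
  specialize (HW _ Hu). rewrite dot_scal_r Hg in HW; last by apply Rinv_0_lt_compat.
  apply Rmult_lt_reg_l with (/ r). by apply Rinv_0_lt_compat. exact HW.
- intros H nu Hnu. apply H. intro E. rewrite E in Hnu. unfold unit_sphere in Hnu.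
  rewrite dot_zero_l in Hnu. lra.
Qed.

Lemma join_widen n (a : vec n) s (j : 'I_n) : join a s (widen_ord (leqnSn n) j) = a j.
Proof.
unfold join. case: insubP => [k Hk Ek|Hk].
- congr (a _). apply: val_inj. by rewrite Ek.
- exfalso. move/negP: Hk. apply. exact (ltn_ord j).
Qed.

Lemma join_max n (a : vec n) s : join a s ord_max = s.
Proof. unfold join. by rewrite insubF //= ltnn. Qed.

Lemma xprime_join n (a : vec n) s : xprime (join a s) = a.
Proof. apply functional_extensionality => j. apply join_widen. Qed.

Lemma xlast_join n (a : vec n) s : xlast (join a s) = s.
Proof. apply join_max. Qed.

Lemma join_split n (x : vec n.+1) : join (xprime x) (xlast x) = x.
Proof.
apply functional_extensionality => i. unfold join.
case: insubP => [j Hj Ej|Hi].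
- unfold xprime. congr (x _). apply: val_inj. by rewrite /= Ej.
- unfold xlast. congr (x _). apply: val_inj => /=.
  have Hl := ltn_ord i. move: Hi Hl. case: i => [m Hm] /= Hi Hl.
  move: Hi Hl. rewrite ltnS. move=> Hi Hl. apply/eqP. rewrite eqn_leq Hl andbT. by rewrite leqNgt.
Qed.

Lemma join_ext n (x y : vec n.+1) : xprime x = xprime y -> xlast x = xlast y -> x = y.
Proof. intros H1 H2. by rewrite -(join_split x) -(join_split y) H1 H2. Qed.

Lemma dot_join n (a b : vec n) s t : dot (join a s) (join b t) = dot a b + s * t.
Proof.
unfold dot. rewrite big_ord_recr /=. rewrite !join_max.
congr (_ + _). apply: eq_bigr => i _. by rewrite !join_widen.
Qed.

Lemma join_scal n l (a : vec n) s : join (vscal l a) (l * s) = vscal l (join a s).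
Proof.
apply join_ext.
- rewrite xprime_join. apply functional_extensionality => j. unfold vscal, xprime. by rewrite join_widen.
- rewrite xlast_join. unfold vscal, xlast. by rewrite join_max.
Qed.

Lemma join_add n (a b : vec n) s t : join (vadd a b) (s + t) = vadd (join a s) (join b t).
Proof.
apply join_ext.
- rewrite xprime_join. apply functional_extensionality => j. unfold vadd, xprime. by rewrite !join_widen.
- rewrite xlast_join. unfold vadd, xlast. by rewrite !join_max.
Qed.

Lemma join_zero n : join (@vzero n) 0 = @vzero n.+1.
Proof.
apply join_ext.
- rewrite xprime_join. apply functional_extensionality => j. by unfold xprime, vzero.
- by rewrite xlast_join.
Qed.

Lemma join_eq_zero n (a : vec n) s : join a s = @vzero n.+1 -> a = @vzero n /\ s = 0.
Proof.
intros H. split.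
- rewrite -(xprime_join a s) H. apply functional_extensionality => j. by unfold xprime, vzero.
- rewrite -(xlast_join a s) H. by unfold xlast, vzero.
Qed.


Section HahnBanach.
Variable k : nat.
Variable p : vec k -> R.
Hypothesis Hsub : forall x y, p (vadd x y) <= p x + p y.
Hypothesis Hhom : forall t x, 0 < t -> p (vscal t x) = t * p x.
Variable nu : vec k.

Lemma p_zero : p (@vzero k) = 0.
Proof.
have E : vscal 2 (@vzero k) = @vzero k.
  apply functional_extensionality => i. unfold vscal, vzero. ring.
have := Hhom (@vzero k) (ltac:(lra) : 0 < 2). rewrite E. lra.
Qed.

Definition supp j (c : vec k) := forall i : 'I_k, (j <= i)%N -> c i = 0.
Definition PP j (y : vec k) := forall a c, supp j c ->
  a * p nu + dot c y <= p (vadd (vscal a nu) c).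

Lemma PP0 : PP 0 (@vzero k).
Proof.
intros a c Hc.
have -> : c = @vzero k by apply functional_extensionality => i; apply Hc.
rewrite dot_zero_l.
have -> : vadd (vscal a nu) (@vzero k) = vscal a nu.
  apply functional_extensionality => i. unfold vadd, vscal, vzero. ring.
destruct (total_order_T a 0) as [[Ha|Ha]|Ha].
- have E : vscal a nu = vscal (-a) (vscal (-1) nu).
    apply functional_extensionality => i. unfold vscal. ring.
  rewrite E Hhom; last lra.
  have E2 : vadd nu (vscal (-1) nu) = @vzero k.
    apply functional_extensionality => i. unfold vadd, vscal, vzero. ring.
  have := Hsub nu (vscal (-1) nu). rewrite E2 p_zero. nra.
- subst a. have -> : vscal 0 nu = @vzero k.
    apply functional_extensionality => i. unfold vscal, vzero. ring.
  rewrite p_zero. lra.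
- rewrite Hhom; lra.
Qed.

Lemma auxN c m a q B P : c < 0 -> a / (-c) * q + / (-c) * B - / (-c) * P <= m -> a * q + (B + c * m) <= P.
Proof.
intros Hc H. have Hd : 0 < - c by lra.
have H5 : (-c) * (a / (-c) * q + / (-c) * B - / (-c) * P) <= (-c) * m by apply Rmult_le_compat_l; lra.
have E : (-c) * (a / (-c) * q + / (-c) * B - / (-c) * P) = a * q + B - P by field; lra.
lra.
Qed.

Lemma auxP c m a q B P : 0 < c -> m <= / c * P - (a / c * q + / c * B) -> a * q + (B + c * m) <= P.
Proof.
intros Hc H.
have H5 : c * m <= c * (/ c * P - (a / c * q + / c * B)) by apply Rmult_le_compat_l; lra.
have E : c * (/ c * P - (a / c * q + / c * B)) = P - (a * q + B) by field; lra.
lra.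
Qed.

Section Step.
Variable j : nat.
Hypothesis Hj : (j < k)%N.
Variable y : vec k.
Hypothesis IH : PP j y.
Let J : 'I_k := Ordinal Hj.
Let ej : vec k := fun i => if i == J then 1 else 0.
Let L a c := a * p nu + dot c y.
Let rep a c := vadd (vscal a nu) c.

Lemma supp_add c1 c2 : supp j c1 -> supp j c2 -> supp j (vadd c1 c2).
Proof. intros H1 H2 i Hi. unfold vadd. rewrite H1 ?H2 //. ring. Qed.

Lemma supp_scal a c : supp j c -> supp j (vscal a c).
Proof. intros H i Hi. unfold vscal. rewrite H //. ring. Qed.

Lemma ub a1 c1 a2 c2 : supp j c1 -> supp j c2 ->
  L a1 c1 - p (vadd (rep a1 c1) (vscal (-1) ej)) <= p (vadd (rep a2 c2) ej) - L a2 c2.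
Proof.
intros H1 H2. have := IH (a1 + a2) (supp_add H1 H2).
have E : vadd (vscal (a1 + a2) nu) (vadd c1 c2) =
   vadd (vadd (rep a1 c1) (vscal (-1) ej)) (vadd (rep a2 c2) ej).
  apply functional_extensionality => i. unfold rep, vadd, vscal. ring.
rewrite E dot_add_l. have := Hsub (vadd (rep a1 c1) (vscal (-1) ej)) (vadd (rep a2 c2) ej).
unfold L. lra.
Qed.

Definition Eset r := exists a c, supp j c /\ r = L a c - p (vadd (rep a c) (vscal (-1) ej)).

Lemma supp_zero : supp j (@vzero k).
Proof. by intros i _. Qed.

Lemma step : exists y', PP j.+1 y'.
Proof.
have Hb : bound Eset.
  exists (p (vadd (rep 0 (@vzero k)) ej) - L 0 (@vzero k)).
  intros r [a [c [Hc ->]]]. apply ub; [exact Hc | apply supp_zero].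
have He : exists r, Eset r.
  eexists. exists 0, (@vzero k). split. apply supp_zero. reflexivity.
destruct (completeness Eset Hb He) as [m [Hm1 Hm2]].
have U : forall a c, supp j c -> m <= p (vadd (rep a c) ej) - L a c.
  intros a c Hc. apply Hm2. intros r [a1 [c1 [Hc1 ->]]]. by apply ub.
have Lo : forall a c, supp j c -> L a c - p (vadd (rep a c) (vscal (-1) ej)) <= m.
  intros a c Hc. apply Hm1. exists a, c. by split.
exists (fun i => if i == J then m else y i).
intros a c Hc.
set c0 : vec k := fun i => if i == J then 0 else c i.
set cj := c J.
have Hc0 : supp j c0.
  intros i Hi. unfold c0. case: eqP => // Hne. apply Hc.
  rewrite ltn_neqAle Hi andbT. apply/eqP => Heq. apply Hne. apply: val_inj. by rewrite /= Heq.
have Edot : dot c (fun i => if i == J then m else y i) = dot c0 y + cj * m.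
  unfold dot. rewrite (bigD1 J) //= (bigD1 J (F := fun i => c0 i * y i)) //=.
  unfold c0, cj. rewrite eqxx. have -> : \big[Rplus/0]_(i < k | i != J) (c i * (if i == J then m else y i))
     = \big[Rplus/0]_(i < k | i != J) ((if i == J then 0 else c i) * y i).
    apply: eq_bigr => i /negbTE ->. done.
  rewrite Rmult_0_l Rplus_0_l Rplus_comm. reflexivity.
have Ec : c = vadd c0 (vscal cj ej).
  apply functional_extensionality => i. unfold vadd, vscal, c0, ej, cj.
  case: eqP => [->|_]; ring.
rewrite Edot Ec.
destruct (total_order_T cj 0) as [[Hn|Hz]|Hp].
- set d := - cj.
  have Hd : 0 < d by unfold d; lra.
  have := Lo (a / d) (vscal (/ d) c0) (supp_scal _ Hc0).
  have E : vadd (rep (a / d) (vscal (/ d) c0)) (vscal (-1) ej) =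
     vscal (/ d) (vadd (vscal a nu) (vadd c0 (vscal cj ej))).
    apply functional_extensionality => i. unfold rep, vadd, vscal, d. field. lra.
  rewrite E Hhom; last by apply Rinv_0_lt_compat.
  unfold L. rewrite dot_scal_l. intros H.
  exact: (auxN Hn H).
- rewrite Hz.
  have -> : vadd (vscal a nu) (vadd c0 (vscal 0 ej)) = vadd (vscal a nu) c0.
    apply functional_extensionality => i. unfold vadd, vscal. ring.
  have := IH a Hc0. lra.
- have := U (a / cj) (vscal (/ cj) c0) (supp_scal _ Hc0).
  have E : vadd (rep (a / cj) (vscal (/ cj) c0)) ej =
     vscal (/ cj) (vadd (vscal a nu) (vadd c0 (vscal cj ej))).
    apply functional_extensionality => i. unfold rep, vadd, vscal. field. lra.
  rewrite E Hhom; last by apply Rinv_0_lt_compat.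
  unfold L. rewrite dot_scal_l. intros H.
  exact: (auxP Hp H).
Qed.
End Step.

Lemma PP_all : forall j, (j <= k)%N -> exists y, PP j y.
Proof.
elim => [|j IHj] Hj.
- exists (@vzero k). apply PP0.
- destruct (IHj (ltnW Hj)) as [y Hy]. exact: (step Hj Hy).
Qed.

Theorem hahn_banach : exists y, (forall mu, dot y mu <= p mu) /\ dot y nu = p nu.
Proof.
destruct (PP_all (leqnn k)) as [y Hy].
have Hs : forall c, supp k c. { intros c i Hi. exfalso. move: Hi. by rewrite leqNgt ltn_ord. }
have H1 : forall mu, dot y mu <= p mu.
  intros mu. have := Hy 0 mu (Hs mu).
  have -> : vadd (vscal 0 nu) mu = mu.
    apply functional_extensionality => i. unfold vadd, vscal. ring.
  rewrite dot_comm. lra.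
exists y. split => //. apply Rle_antisym; first by apply H1.
have := Hy 1 (vscal (-1) nu) (Hs _).
have -> : vadd (vscal 1 nu) (vscal (-1) nu) = @vzero k.
  apply functional_extensionality => i. unfold vadd, vscal, vzero. ring.
rewrite p_zero dot_scal_l dot_comm. lra.
Qed.
End HahnBanach.


Lemma hom_zero k (g : vec k -> R) : pos_homogeneous g -> g (@vzero k) = 0.
Proof.
intros Hg. have E : vscal 2 (@vzero k) = @vzero k.
  apply functional_extensionality => i. unfold vscal, vzero. ring.
have := Hg 2 (@vzero k) (ltac:(lra) : 0 < 2). rewrite E. lra.
Qed.

Lemma subadd k (g : vec k -> R) : convex_fun g -> pos_homogeneous g ->
  forall x y, g (vadd x y) <= g x + g y.
Proof.
intros Hc Hg x y.
have E : vadd x y = vscal 2 (vadd (vscal (1/2) x) (vscal (1 - 1/2) y)).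
  apply functional_extensionality => i. unfold vadd, vscal. field.
rewrite E Hg; last lra. have := Hc x y (1/2) (ltac:(lra)). lra.
Qed.

Lemma dual_a k (g : vec k -> R) y : pos_homogeneous g -> Wulff g y ->
  forall nu, dot y nu <= g nu.
Proof.
intros Hg HW nu. destruct (classic (nu = @vzero k)) as [->|Hn].
- rewrite dot_zero_r hom_zero //. lra.
- apply Rlt_le. by apply (proj1 (Wulff_iff y Hg)).
Qed.

Lemma dual_b k (g : vec k -> R) : convex_fun g -> pos_homogeneous g ->
  nonneg_fun g -> positive_off_zero g ->
  forall nu eps, 0 < eps -> exists y, Wulff g y /\ g nu - eps < dot y nu.
Proof.
intros Hc Hg Hn Hp nu eps He.
destruct (hahn_banach (subadd Hc Hg) Hg nu) as [y [H1 H2]].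
have Hgn := Hn nu.
set l := g nu / (g nu + eps).
have Hl0 : 0 <= l by unfold l; apply Rmult_le_pos; [lra|]; apply Rlt_le, Rinv_0_lt_compat; lra.
have Hl1 : l < 1 by unfold l; apply (Rmult_lt_reg_r (g nu + eps)); [lra|]; field_simplify; lra.
exists (vscal l y). split.
- apply (proj2 (Wulff_iff _ Hg)). intros mu Hmu. rewrite dot_scal_l.
  have := Hp mu Hmu. have := H1 mu. nra.
- rewrite dot_scal_l H2. unfold l.
  apply (Rmult_lt_reg_r (g nu + eps)); [lra|]. field_simplify; [|lra]. nra.
Qed.


Lemma vnorm_join_le n (a : vec n) b : vnorm (join a b) <= vnorm a + Rabs b.
Proof.
unfold vnorm. rewrite dot_join.
have Ha := dot_self_ge0 a. have Hs := sqrt_pos (dot a a). have Hb := Rabs_pos b.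
rewrite -(sqrt_square (sqrt (dot a a) + Rabs b)); last lra.
apply sqrt_le_1_alt.
have E1 := sqrt_sqrt _ Ha.
have E2 : Rabs b * Rabs b = b * b. { rewrite -Rabs_mult. apply Rabs_right. nra. }
nra.
Qed.

Lemma vnorm_join0 n (a : vec n) : vnorm (join a 0) = vnorm a.
Proof. unfold vnorm. rewrite dot_join. f_equal. ring. Qed.

Lemma vnorm_scal n c (a : vec n) : vnorm (vscal c a) = Rabs c * vnorm a.
Proof.
unfold vnorm. rewrite dot_scal_l dot_scal_r -Rmult_assoc sqrt_mult_alt.
- f_equal. by rewrite -sqrt_Rsqr_abs.
- nra.
Qed.

Lemma join_sub n (a b : vec n) s t : vsub (join a s) (join b t) = join (vsub a b) (s - t).
Proof.
apply join_ext.
- rewrite xprime_join. apply functional_extensionality => j. unfold vsub, xprime. by rewrite !join_widen.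
- rewrite xlast_join. unfold vsub, xlast. by rewrite !join_max.
Qed.

Lemma join_lin n l m (a b : vec n) s t :
  join (vadd (vscal l a) (vscal m b)) (l * s + m * t) = vadd (vscal l (join a s)) (vscal m (join b t)).
Proof. by rewrite join_add !join_scal. Qed.

Section Part2.
Variable n : nat.
Hypothesis Hn : (1 <= n)%N.
Variable f : vec n.+1 -> R.
Hypotheses (Hl : lsc_fun f) (Hc : convex_fun f) (Hh : pos_homogeneous f) (Hnn : nonneg_fun f)
  (Hp : positive_off_zero f).
Variable Kh : vec n -> Prop.
Variable alpha : R -> R.
Hypothesis Ha0 : forall t, 0 <= alpha t.
Hypothesis Hsl : slices_scaled (Wulff f) Kh alpha.

Let K := Wulff f.
Let h x := f (join x 0).

Lemma Kjoin w tau : K (join w tau) -> 0 < alpha tau /\ exists u, Kh u /\ w = vscal (alpha tau) u.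
Proof.
intros HK. destruct Hsl as [H1 H2].
have Hne : alpha tau <> 0. { intro E. exact: (H1 _ E w HK). }
split. { have := Ha0 tau. lra. }
exact: (proj1 (H2 tau Hne w) HK).
Qed.

Lemma Kjoin_inv u tau : 0 < alpha tau -> Kh u -> K (join (vscal (alpha tau) u) tau).
Proof.
intros Ht Hu. destruct Hsl as [H1 H2].
have Hne : alpha tau <> 0 by lra.
apply (proj2 (H2 tau Hne _)). by exists u.
Qed.

Lemma K_decomp y : K y -> exists tau u, 0 < alpha tau /\ Kh u /\ y = join (vscal (alpha tau) u) tau.
Proof.
intros HK. rewrite -(join_split y) in HK. destruct (Kjoin HK) as [Ht [u [Hu Hw]]].
exists (xlast y), u. split => //. split => //. by rewrite -Hw join_split.
Qed.

Lemma h_zero_inv x : h x = 0 -> x = @vzero n.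
Proof.
intro H. apply NNPP => Hx. have : join x 0 <> @vzero n.+1.
  intro E. apply Hx. exact: (proj1 (join_eq_zero E)).
move/Hp. unfold h in H. lra.
Qed.

Lemma Qlem x z u delta : h x = h z -> Kh u -> 0 < delta ->
  exists u', Kh u' /\ dot u x - delta < dot u' z.
Proof.
intros Hxz Hu Hd. apply NNPP => Hno.
have H : forall u', Kh u' -> dot u' z <= dot u x - delta.
  intros u' Hu'. apply Rnot_lt_le => Hlt. apply Hno. by exists u'.
destruct (classic (z = @vzero n)) as [Ez|Nz].
- have Ex : x = @vzero n.
    apply h_zero_inv. rewrite Hxz Ez. unfold h. rewrite join_zero. exact: hom_zero.
  have := H u Hu. rewrite Ex Ez !dot_zero_r. lra.
- have Hz : 0 < h z.
    apply Hp. intro E. apply Nz. exact: (proj1 (join_eq_zero E)).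
  set c := dot u x.
  destruct (Rle_or_lt c delta) as [Hcd|Hcd].
  + destruct (dual_b Hc Hh Hnn Hp (join z 0) (ltac:(lra) : 0 < h z / 2)) as [y [Hy Hy2]].
    destruct (K_decomp Hy) as [tau [u' [Ht [Hu' Ey]]]].
    rewrite Ey dot_join dot_scal_l in Hy2.
    have := H u' Hu'. fold c. intros HH.
    have : alpha tau * dot u' z <= 0 by nra.
    unfold h in *. lra.
  + have Hc0 : 0 < c by lra.
    set eps := Rmin (h z / 2) (h z * delta / (2 * c)).
    have He : 0 < eps.
      unfold eps. apply Rmin_glb_lt; [lra|]. apply Rmult_lt_0_compat; [nra|].
      apply Rinv_0_lt_compat. lra.
    destruct (dual_b Hc Hh Hnn Hp (join z 0) He) as [y [Hy Hy2]].
    destruct (K_decomp Hy) as [tau [u' [Ht [Hu' Ey]]]].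
    rewrite Ey dot_join dot_scal_l in Hy2.
    have HD := H u' Hu'. fold c in HD.
    have Hx := dual_a Hh (Kjoin_inv Ht Hu) (join x 0).
    rewrite dot_join dot_scal_l in Hx. fold c in Hx.
    have E1 : eps <= h z / 2 by apply Rmin_l.
    have E2 : eps <= h z * delta / (2 * c) by apply Rmin_r.
    unfold h in *. rewrite Hxz in Hx. clear Hno H.
    move: Hy2 Hx HD E1 E2 Hz Ht. clearbody eps c. set F := f (join z 0). set A := alpha tau. set D := dot u' z.
    intros Hy2 Hx HD E1 E2 Hz Ht.
    have P1 : A * D <= A * (c - delta) by apply Rmult_le_compat_l; lra.
    have Pd : 0 < A * delta by nra.
    have Q1 : F / 2 < A * c by nra.
    have Q2 : eps * (2 * c) <= F * delta.
      have : eps * (2 * c) <= F * delta / (2 * c) * (2 * c) by apply Rmult_le_compat_r; lra.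
      have -> : F * delta / (2 * c) * (2 * c) = F * delta by field; lra.
      done.
    have Q3 : F * delta < 2 * (A * c) * delta by nra.
    have Q4 : (eps - A * delta) * (2 * c) < 0 by nra.
    have Q5 : eps - A * delta < 0.
      destruct (Rlt_or_le (eps - A * delta) 0) as [|Hq]; auto. nra.
    nra.
Qed.

Lemma INVle x z t : h x = h z -> f (join x t) <= f (join z t).
Proof.
intros Hxz. apply le_eps => eps He.
destruct (dual_b Hc Hh Hnn Hp (join x t) (ltac:(lra) : 0 < eps / 2)) as [y [Hy Hy2]].
destruct (K_decomp Hy) as [tau [u [Ht [Hu Ey]]]].
rewrite Ey dot_join dot_scal_l in Hy2.
have Hdel : 0 < eps / (2 * alpha tau).
  apply Rmult_lt_0_compat; [lra|]. apply Rinv_0_lt_compat. lra.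
destruct (Qlem Hxz Hu Hdel) as [u' [Hu' Hlt]].
have Hz := dual_a Hh (Kjoin_inv Ht Hu') (join z t).
rewrite dot_join dot_scal_l in Hz.
have : alpha tau * (dot u x - eps / (2 * alpha tau)) < alpha tau * dot u' z
  by apply Rmult_lt_compat_l.
have -> : alpha tau * (dot u x - eps / (2 * alpha tau)) = alpha tau * dot u x - eps / 2 by field; lra.
lra.
Qed.

Lemma INV x z t : h x = h z -> f (join x t) = f (join z t).
Proof. intros H. apply Rle_antisym; apply INVle => //. Qed.

Lemma h_hom : pos_homogeneous h.
Proof.
intros t x Ht. unfold h. have := join_scal t x 0. rewrite Rmult_0_r => ->. by apply Hh.
Qed.

Lemma part2_sym : symmetrizable f.
Proof.
set e0 : vec n := fun i => if val i == 0%N then 1 else 0.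
have He0 : e0 <> @vzero n.
  intro E. have := f_equal (fun v => v (Ordinal Hn)) E. unfold e0, vzero => /=. lra.
have Hhe0 : 0 < h e0.
  apply Hp. intro E. apply He0. exact: (proj1 (join_eq_zero E)).
set e := vscal (/ h e0) e0.
have Hhs : forall s, 0 <= s -> h (vscal s e) = s.
  intros s Hs. destruct (Rle_lt_or_eq_dec _ _ Hs) as [Hs'|<-].
  - unfold e. rewrite h_hom // h_hom; last by apply Rinv_0_lt_compat.
    field. lra.
  - have -> : vscal 0 e = @vzero n.
      apply functional_extensionality => i. unfold vscal, vzero. ring.
    unfold h. rewrite join_zero. exact: hom_zero.
split => //. split => //. split => //. split => //.
exists h, (fun s t => f (join (vscal s e) t)).
split; [|split; [|split; [|split; [|split; [|split; [|split; [|split]]]]]]].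
- intros x eps Heps. destruct (Hl (join x 0) Heps) as [d [Hd Hd2]].
  exists d. split => // y Hy. apply Hd2. by rewrite join_sub Rminus_0_r vnorm_join0.
- intros x. apply Hnn.
- exact h_hom.
- intros x y l Hl01. unfold h.
  have := join_lin l (1 - l) x y 0 0. rewrite !Rmult_0_r Rplus_0_r => ->. by apply Hc.
- intros x Hx. apply Hp. intro E. apply Hx. exact: (proj1 (join_eq_zero E)).
- intros s t eps Hs Heps. destruct (Hl (join (vscal s e) t) Heps) as [d [Hd Hd2]].
  have Hne := sqrt_pos (dot e e). fold (vnorm e) in Hne.
  exists (d / (vnorm e + 2)). split.
    apply Rmult_lt_0_compat; [lra|]. apply Rinv_0_lt_compat. lra.
  intros s' t' Hs' H1 H2. apply Hd2. rewrite join_sub.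
  have -> : vsub (vscal s' e) (vscal s e) = vscal (s' - s) e.
    apply functional_extensionality => i. unfold vsub, vscal. ring.
  eapply Rle_lt_trans; first by apply vnorm_join_le.
  rewrite vnorm_scal.
  have E : d = d / (vnorm e + 2) * (vnorm e + 2) by field; lra.
  have Hq : 0 < d / (vnorm e + 2). apply Rmult_lt_0_compat; [lra|]. apply Rinv_0_lt_compat. lra.
  have := Rabs_pos (s' - s). have := Rabs_pos (t' - t).
  move: H1 H2 Hq E. set q := d / (vnorm e + 2). intros. nra.
- intros s t Hs. apply Hnn.
- intros s1 t1 s2 t2 l Hs1 Hs2 Hl01.
  have -> : vscal (l * s1 + (1 - l) * s2) e = vadd (vscal l (vscal s1 e)) (vscal (1 - l) (vscal s2 e)).
    apply functional_extensionality => i. unfold vadd, vscal. ring.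
  rewrite join_lin. by apply Hc.
- intros x. rewrite -{1}(join_split x). apply INV. rewrite Hhs //. unfold h. apply Hnn.
Qed.
End Part2.


Lemma Rabs_le_inv x a : Rabs x <= a -> - a <= x <= a.
Proof.
intros H. destruct (Rle_or_lt 0 x) as [Hx|Hx].
- rewrite Rabs_right in H; lra.
- rewrite Rabs_left in H; lra.
Qed.

Lemma CL (g : R -> R) a b : a <= b -> (forall x, a <= x <= b -> 0 < g x) ->
  (forall x, a <= x <= b -> forall eps, 0 < eps -> exists d, 0 < d /\
      forall y, Rabs (y - x) < d -> g x - eps < g y) ->
  exists eta, 0 < eta /\ forall x, a <= x <= b -> eta <= g x.
Proof.
intros Hab Hpos Hlsc.
set E := fun x => a <= x <= b /\ exists eta, 0 < eta /\ forall y, a <= y <= x -> eta <= g y.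
have Ea : E a.
  split; [lra|]. exists (g a). split; [apply Hpos; lra|].
  intros y Hy. have -> : y = a by lra. lra.
have Hb : bound E by exists b; intros x [Hx _]; lra.
destruct (completeness E Hb (ex_intro _ a Ea)) as [m [Hm1 Hm2]].
have Ham : a <= m by apply Hm1.
have Hmb : m <= b. { apply Hm2. intros x [Hx _]. lra. }
have Hgm : 0 < g m by apply Hpos; lra.
destruct (Hlsc m (conj Ham Hmb) (g m / 2) (ltac:(lra))) as [d [Hd Hdd2]].
have [x [[Hx [eta [Heta Heta2]]] Hxm]] : exists x, E x /\ m - d < x.
  apply NNPP => Hno. have : m <= m - d.
    apply Hm2. intros x Ex. apply Rnot_lt_le => Hlt. apply Hno. by exists x.
  lra.
set x2 := Rmin b (m + d / 2).
have Ex2 : E x2.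
  split.
    split; [unfold x2; apply Rmin_glb; lra | apply Rmin_l].
  exists (Rmin eta (g m / 2)). split; [apply Rmin_glb_lt; lra|].
  intros y Hy. destruct (Rle_or_lt y x) as [Hyx|Hyx].
  - eapply Rle_trans; [apply Rmin_l|]. apply Heta2. lra.
  - eapply Rle_trans; [apply Rmin_r|].
    have Hy2 : y <= m + d / 2 by (eapply Rle_trans; [apply Hy|apply Rmin_r]).
    have : Rabs (y - m) < d. { apply Rabs_def1; lra. }
    move/Hdd2. lra.
have Hx2m : x2 <= m by apply Hm1.
destruct (Rle_or_lt b (m + d / 2)) as [Hbm|Hbm].
- have Hx2b : x2 = b by unfold x2; apply Rmin_left.
  rewrite Hx2b in Ex2. destruct Ex2 as [_ [eta2 [He2 He22]]].
  exists eta2. split => //.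
- have : x2 = m + d / 2 by unfold x2; apply Rmin_right; lra.
  lra.
Qed.

Lemma SL (phi : R -> R -> R) : lsc_fun2 phi ->
  (forall l s t, 0 < l -> 0 <= s -> phi (l * s) (l * t) = l * phi s t) ->
  forall t c, 0 <= c -> t < phi 0 1 -> - t < phi 0 (-1) ->
  (forall s, c + t * s < phi 1 s) ->
  exists eta, 0 < eta /\ forall sig s, 0 < sig -> (c + eta) * sig + t * s <= phi sig s.
Proof.
intros Hl Hh t c Hc H01 H0m Hs.
set g := fun s => phi 1 s - c - t * s.
destruct (Hl 0 1 ((phi 0 1 - t) / 2) (Rle_refl 0) (ltac:(lra))) as [d1 [Hd1 Hd12]].
destruct (Hl 0 (-1) ((phi 0 (-1) + t) / 2) (Rle_refl 0) (ltac:(lra))) as [d2 [Hd2 Hd22]].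
have Hpl : forall s, 0 < s -> 1 / s < d1 -> (1 + c) / ((phi 0 1 - t) / 2) <= s -> 1 <= g s.
  intros s Hs0 Hsd Hsb. unfold g.
  have E : phi 1 s = s * phi (1 / s) 1.
    rewrite -Hh; [|lra|]. f_equal; field; lra.
    apply Rlt_le, Rdiv_lt_0_compat; lra.
  have Hp : phi 0 1 - (phi 0 1 - t) / 2 < phi (1 / s) 1.
    apply Hd12. apply Rlt_le, Rdiv_lt_0_compat; lra.
    rewrite Rminus_0_r Rabs_right; [lra|]. apply Rle_ge, Rlt_le, Rdiv_lt_0_compat; lra.
    rewrite Rminus_diag Rabs_R0. lra.
  rewrite E.
  have Hq : 1 + c <= s * ((phi 0 1 - t) / 2).
    have H := Rmult_le_compat_r ((phi 0 1 - t) / 2) _ _ (ltac:(lra)) Hsb.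
    move: H. have -> : (1 + c) / ((phi 0 1 - t) / 2) * ((phi 0 1 - t) / 2) = 1 + c by field; lra.
    lra.
  nra.
have Hmi : forall s, s < 0 -> 1 / (- s) < d2 -> (1 + c) / ((phi 0 (-1) + t) / 2) <= - s -> 1 <= g s.
  intros s Hs0 Hsd Hsb. unfold g.
  have E : phi 1 s = (- s) * phi (1 / (- s)) (-1).
    rewrite -Hh; [|lra|]. f_equal; field; lra.
    apply Rlt_le, Rdiv_lt_0_compat; lra.
  have Hp : phi 0 (-1) - (phi 0 (-1) + t) / 2 < phi (1 / (- s)) (-1).
    apply Hd22. apply Rlt_le, Rdiv_lt_0_compat; lra.
    rewrite Rminus_0_r Rabs_right; [lra|]. apply Rle_ge, Rlt_le, Rdiv_lt_0_compat; lra.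
    rewrite Rminus_diag Rabs_R0. lra.
  rewrite E.
  have Hq : 1 + c <= (- s) * ((phi 0 (-1) + t) / 2).
    have H := Rmult_le_compat_r ((phi 0 (-1) + t) / 2) _ _ (ltac:(lra)) Hsb.
    move: H. have -> : (1 + c) / ((phi 0 (-1) + t) / 2) * ((phi 0 (-1) + t) / 2) = 1 + c by field; lra.
    lra.
  nra.
set S := Rmax (Rmax (1 / d1 + 1) (1 / d2 + 1))
              (Rmax ((1 + c) / ((phi 0 1 - t) / 2)) ((1 + c) / ((phi 0 (-1) + t) / 2))).
have HS1 : 1 / d1 + 1 <= S by unfold S; eapply Rle_trans; [apply Rmax_l|apply Rmax_l].
have HS2 : 1 / d2 + 1 <= S by unfold S; eapply Rle_trans; [apply Rmax_r|apply Rmax_l].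
have HS3 : (1 + c) / ((phi 0 1 - t) / 2) <= S by unfold S; eapply Rle_trans; [apply Rmax_l|apply Rmax_r].
have HS4 : (1 + c) / ((phi 0 (-1) + t) / 2) <= S by unfold S; eapply Rle_trans; [apply Rmax_r|apply Rmax_r].
have Hd1p : 0 < 1 / d1 by apply Rdiv_lt_0_compat; lra.
have Hout : forall s, S < Rabs s -> 1 <= g s.
  intros s Hs'. destruct (Rle_or_lt 0 s) as [Hs0|Hs0].
  - rewrite Rabs_right in Hs'; last lra.
    apply Hpl; [lra| |lra].
    have : 1 / d1 < s by lra.
    intros H. apply (Rmult_lt_reg_r s); [lra|]. apply (Rmult_lt_reg_l (/ d1)).
      apply Rinv_0_lt_compat; lra.
    have -> : / d1 * (1 / s * s) = 1 / d1 by field; lra.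
    have -> : / d1 * (d1 * s) = s by field; lra.
    done.
  - rewrite Rabs_left in Hs'; last lra.
    have Hd2p : 0 < 1 / d2 by apply Rdiv_lt_0_compat; lra.
    apply Hmi; [lra| |lra].
    have : 1 / d2 < - s by lra.
    intros H. apply (Rmult_lt_reg_r (- s)); [lra|]. apply (Rmult_lt_reg_l (/ d2)).
      apply Rinv_0_lt_compat; lra.
    have -> : / d2 * (1 / (- s) * (- s)) = 1 / d2 by field; lra.
    have -> : / d2 * (d2 * (- s)) = - s by field; lra.
    done.
have HS0 : 0 <= S by lra.
destruct (@CL g (- S) S (ltac:(lra))) as [eta0 [He0 He02]].
- intros x _. unfold g. have := Hs x. lra.
- intros x _ eps Heps.
  destruct (Hl 1 x (eps / 2) (ltac:(lra)) (ltac:(lra))) as [d [Hd Hdd2]].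
  exists (Rmin d (eps / (2 * (Rabs t + 1)))). split.
    apply Rmin_glb_lt => //. apply Rdiv_lt_0_compat; [lra|]. have := Rabs_pos t. lra.
  intros y Hy. unfold g.
  have Hy1 : Rabs (y - x) < d by eapply Rlt_le_trans; [apply Hy|apply Rmin_l].
  have Hy2 : Rabs (y - x) < eps / (2 * (Rabs t + 1)) by eapply Rlt_le_trans; [apply Hy|apply Rmin_r].
  have := Hdd2 1 y (ltac:(lra)) (ltac:(rewrite Rminus_diag Rabs_R0; lra)) Hy1.
  have Ht : Rabs (t * y - t * x) <= eps / 2.
    rewrite -Rmult_minus_distr_l Rabs_mult.
    have Hta := Rabs_pos t. have Hya := Rabs_pos (y - x).
    have : Rabs t * Rabs (y - x) <= (Rabs t + 1) * (eps / (2 * (Rabs t + 1))) by nra.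
    have -> : (Rabs t + 1) * (eps / (2 * (Rabs t + 1))) = eps / 2 by field; lra.
    done.
  have := Rabs_le_inv Ht.
  lra.
set eta := Rmin 1 eta0.
have Heta : 0 < eta by apply Rmin_glb_lt; lra.
have Hall : forall s, eta <= g s.
  intros s. destruct (Rle_or_lt (Rabs s) S) as [Hin|Hout'].
  - eapply Rle_trans; [apply Rmin_r|]. apply He02. apply Rabs_le_inv in Hin. lra.
  - eapply Rle_trans; [apply Rmin_l|]. by apply Hout.
exists eta. split => // sig s Hsig.
have E : phi sig s = sig * phi 1 (s / sig).
  rewrite -Hh; [|lra|lra]. f_equal; field; lra.
rewrite E. have := Hall (s / sig). unfold g. intros H.
have : sig * (c + eta + t * (s / sig)) <= sig * phi 1 (s / sig) by apply Rmult_le_compat_l; lra.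
have -> : sig * (c + eta + t * (s / sig)) = (c + eta) * sig + t * s by field; lra.
done.
Qed.


Lemma convcomb_lt a b P l : a < P -> b < P -> 0 <= l <= 1 -> l * a + (1 - l) * b < P.
Proof.
intros Ha Hb Hl. destruct (Rle_lt_or_eq_dec 0 l (proj1 Hl)) as [Hl0|<-].
- have : l * a < l * P by apply Rmult_lt_compat_l.
  have : (1 - l) * b <= (1 - l) * P by apply Rmult_le_compat_l; lra.
  lra.
- lra.
Qed.

Section Part1.
Variable n : nat.
Hypothesis Hn : (1 <= n)%N.
Variables (f : vec n.+1 -> R) (h : vec n -> R) (phi : R -> R -> R).
Hypotheses (Hfh : pos_homogeneous f)
  (Hhh : pos_homogeneous h) (Hhp : positive_off_zero h)
  (Hpl : lsc_fun2 phi)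
  (Hrep : forall x : vec n.+1, f x = phi (h (xprime x)) (xlast x)).

Let K := Wulff f.

Lemma frep a s : f (join a s) = phi (h a) s.
Proof. by rewrite Hrep xprime_join xlast_join. Qed.

Lemma hz : h (@vzero n) = 0.
Proof. exact: hom_zero. Qed.

Lemma nz_of_h x : 0 < h x -> x <> @vzero n.
Proof. intros H E. rewrite E hz in H. lra. Qed.

Definition e0 : vec n := fun i => if val i == 0%N then 1 else 0.

Lemma he0 : 0 < h e0.
Proof.
apply Hhp. intro E. have := f_equal (fun v => v (Ordinal Hn)) E. unfold e0, vzero => /=. lra.
Qed.

Definition ee : vec n := vscal (/ h e0) e0.

Lemma h_se s : 0 <= s -> h (vscal s ee) = s.
Proof.
intros Hs. have H0 := he0. destruct (Rle_lt_or_eq_dec _ _ Hs) as [Hs'|<-].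
- unfold ee. rewrite Hhh // Hhh; last by apply Rinv_0_lt_compat.
  field. lra.
- have -> : vscal 0 ee = @vzero n.
    apply functional_extensionality => i. unfold vscal, vzero. ring.
  exact hz.
Qed.

Lemma phi_f sig s : 0 <= sig -> phi sig s = f (join (vscal sig ee) s).
Proof. intros H. by rewrite frep h_se. Qed.

Lemma phi_hom l sig s : 0 < l -> 0 <= sig -> phi (l * sig) (l * s) = l * phi sig s.
Proof.
intros Hl Hs. rewrite phi_f; last nra. rewrite phi_f //.
have -> : vscal (l * sig) ee = vscal l (vscal sig ee).
  apply functional_extensionality => i. unfold vscal. ring.
by rewrite join_scal Hfh.
Qed.

Lemma Kmem w t : K (join w t) <->
  forall nu s, join nu s <> @vzero n.+1 -> dot w nu + t * s < phi (h nu) s.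
Proof.
split.
- intros HK nu s Hne. rewrite -dot_join -frep. by apply (proj1 (Wulff_iff _ Hfh)).
- intros H. apply (proj2 (Wulff_iff _ Hfh)). intros nu Hnu.
  rewrite -(join_split nu) in Hnu *. rewrite dot_join frep. by apply H.
Qed.

Definition P0 t := K (join (@vzero n) t).

Lemma P0_iff t : P0 t <-> forall nu s, join nu s <> @vzero n.+1 -> t * s < phi (h nu) s.
Proof.
unfold P0. rewrite Kmem. split => H nu s Hne; have := H nu s Hne; rewrite dot_zero_l; lra.
Qed.

Lemma join_nz_l nu s : nu <> @vzero n -> join nu s <> @vzero n.+1.
Proof. intros H E. apply H. exact: (proj1 (join_eq_zero E)). Qed.

Lemma join_nz_r nu s : s <> 0 -> join nu s <> @vzero n.+1.
Proof. intros H E. apply H. exact: (proj2 (join_eq_zero E)). Qed.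

Lemma P0_sig t : P0 t -> forall sig s, 0 < sig -> t * s < phi sig s.
Proof.
intros HP sig s Hs. rewrite P0_iff in HP.
have Hh : 0 < h (vscal sig ee) by rewrite h_se; lra.
have := HP (vscal sig ee) s (join_nz_l (nz_of_h Hh)).
by rewrite h_se; last lra.
Qed.

Lemma P0_01 t : P0 t -> t < phi 0 1 /\ - t < phi 0 (-1).
Proof.
intros HP. rewrite P0_iff in HP. split.
- have Hs : (1:R) <> 0 by lra. have := HP (@vzero n) 1 (@join_nz_r (@vzero n) 1 Hs). rewrite hz. lra.
- have Hs : (-1:R) <> 0 by lra. have := HP (@vzero n) (-1) (@join_nz_r (@vzero n) (-1) Hs). rewrite hz. lra.
Qed.

Lemma K_P0 w t : K (join w t) -> P0 t.
Proof.
intros HK. rewrite Kmem in HK. apply P0_iff. intros nu s Hne.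
destruct (classic (nu = @vzero n)) as [Enu|Nnu].
- have := HK nu s Hne. rewrite Enu dot_zero_r. lra.
- destruct (Rle_or_lt 0 (dot w nu)) as [Hd|Hd].
  + have := HK nu s Hne. lra.
  + have Hsig := Hhp Nnu.
    have Nm : vscal (-1) nu <> @vzero n.
      intro E. apply Nnu. apply functional_extensionality => i.
      have := f_equal (fun v => v i) E. unfold vscal, vzero => /=. lra.
    have Hm := Hhp Nm.
    set mu := vscal (h nu / h (vscal (-1) nu)) (vscal (-1) nu).
    have Hhmu : h mu = h nu.
      unfold mu. rewrite Hhh. field. lra. apply Rdiv_lt_0_compat; lra.
    have Nmu : mu <> @vzero n by apply nz_of_h; lra.
    have := HK mu s (join_nz_l Nmu). rewrite Hhmu.
    unfold mu. rewrite !dot_scal_r.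
    have : 0 < h nu / h (vscal (-1) nu) by apply Rdiv_lt_0_compat; lra.
    nra.
Qed.

Definition Aset t c := 0 <= c /\ forall sig s, 0 < sig -> c * sig + t * s <= phi sig s.

Definition alpha t := epsilon (inhabits 0)
  (fun a => (P0 t /\ is_lub (Aset t) a) \/ (~ P0 t /\ a = 0)).

Lemma alpha_spec t : (P0 t /\ is_lub (Aset t) (alpha t)) \/ (~ P0 t /\ alpha t = 0).
Proof.
unfold alpha. apply epsilon_spec. destruct (classic (P0 t)) as [HP|HP].
- have Hb : bound (Aset t).
    exists (phi 1 0). intros c [_ Hc]. have := Hc 1 0 (ltac:(lra)). lra.
  have He : exists c, Aset t c.
    exists 0. split; [lra|]. intros sig s Hs. have := @P0_sig t HP sig s Hs. lra.
  destruct (completeness _ Hb He) as [m Hm]. exists m. left. by split.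
- exists 0. by right.
Qed.

Lemma alpha_P0 t : P0 t -> 0 < alpha t /\ Aset t (alpha t) /\ forall c, Aset t c -> c <= alpha t.
Proof.
intros HP. destruct (alpha_spec t) as [[_ [Hm1 Hm2]]|[HnP _]]; last by [].
have [H01 H0m] := P0_01 HP.
destruct (SL Hpl phi_hom (Rle_refl 0) H01 H0m) as [eta [He He2]].
  intros s. have := @P0_sig t HP 1 s (ltac:(lra)). lra.
have Ha : Aset t (0 + eta) by split; [lra|exact He2].
have Hpos : 0 < alpha t by have := Hm1 _ Ha; lra.
split => //. split; last by intros c Hc; apply Hm1.
split; [lra|]. intros sig s Hs.
have : alpha t <= (phi sig s - t * s) / sig.
  apply Hm2. intros c [_ Hc]. have := Hc sig s Hs.
  intros H. apply (Rmult_le_reg_r sig); [lra|].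
  have -> : (phi sig s - t * s) / sig * sig = phi sig s - t * s by field; lra.
  lra.
intros H. have := Rmult_le_compat_r sig _ _ (Rlt_le _ _ Hs) H.
have -> : (phi sig s - t * s) / sig * sig = phi sig s - t * s by field; lra.
lra.
Qed.

Lemma alpha_nP0 t : ~ P0 t -> alpha t = 0.
Proof. intros H. by destruct (alpha_spec t) as [[]|[]]. Qed.

Lemma alpha_ge0 t : 0 <= alpha t.
Proof.
destruct (classic (P0 t)) as [HP|HP].
- have := proj1 (alpha_P0 HP). lra.
- rewrite alpha_nP0 //. lra.
Qed.

Lemma P0_of_alpha t : alpha t <> 0 -> P0 t.
Proof. intros H. apply NNPP => HP. by apply H, alpha_nP0. Qed.

Lemma part1 : exists a : R -> R, (forall t, Rle 0 (a t)) /\ concave_on_pos a /\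
  slices_scaled (Wulff f) (Wulff h) a.
Proof.
exists alpha. split; first exact alpha_ge0. split.
- intros s t l Hs Ht Hl.
  have HPs := P0_of_alpha (ltac:(lra) : alpha s <> 0).
  have HPt := P0_of_alpha (ltac:(lra) : alpha t <> 0).
  have HPm : P0 (l * s + (1 - l) * t).
    apply P0_iff. intros nu r Hne.
    have := proj1 (P0_iff s) HPs nu r Hne. have := proj1 (P0_iff t) HPt nu r Hne.
    intros H1 H2.
    have -> : (l * s + (1 - l) * t) * r = l * (s * r) + (1 - l) * (t * r) by ring.
    by apply convcomb_lt.
  apply (proj2 (proj2 (alpha_P0 HPm))). split.
  + have := alpha_ge0 s. have := alpha_ge0 t. nra.
  + intros sig r Hsig.
    have [_ [[_ As] _]] := alpha_P0 HPs. have [_ [[_ At] _]] := alpha_P0 HPt.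
    have := As sig r Hsig. have := At sig r Hsig. nra.
- split.
  + intros t Ht x' Hx. have HP := K_P0 Hx. have := proj1 (alpha_P0 HP). lra.
  + intros t Ht x'. have HP := P0_of_alpha Ht.
    have [Hapos [[_ HA] Hmax]] := alpha_P0 HP.
    split.
    * intros Hx. unfold slice in Hx.
      have Hcl : forall nu, nu <> @vzero n -> dot x' nu < alpha t * h nu.
        intros nu Hnu. apply Rnot_le_lt => Hle.
        have Hsig := Hhp Hnu.
        set beta := dot x' nu / h nu.
        have Hb : alpha t <= beta.
          unfold beta. apply (Rmult_le_reg_r (h nu)); [lra|].
          have -> : dot x' nu / h nu * h nu = dot x' nu by field; lra. lra.
        have Hstr : forall s, beta + t * s < phi 1 s.
          intros s. set mu := vscal (/ h nu) nu.
          have Hhmu : h mu = 1 by unfold mu; rewrite Hhh; [field; lra|apply Rinv_0_lt_compat; lra].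
          have Nmu : mu <> @vzero n by apply nz_of_h; lra.
          have := proj1 (Kmem x' t) Hx mu s (join_nz_l Nmu).
          rewrite Hhmu. unfold mu. rewrite dot_scal_r. unfold beta.
          have -> : dot x' nu / h nu = / h nu * dot x' nu by field; lra. done.
        have [H01 H0m] := P0_01 HP.
        destruct (SL Hpl phi_hom (ltac:(lra) : 0 <= beta) H01 H0m Hstr) as [eta [He He2]].
        have Hbe : 0 <= beta + eta by lra.
        have := Hmax (beta + eta) (conj Hbe He2). lra.
      exists (vscal (/ alpha t) x'). split.
      -- apply (proj2 (Wulff_iff _ Hhh)). intros nu Hnu. rewrite dot_scal_l.
         have := Hcl nu Hnu. intros H. apply (Rmult_lt_reg_l (alpha t)); [lra|].
         have -> : alpha t * (/ alpha t * dot x' nu) = dot x' nu by field; lra. done.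
      -- apply functional_extensionality => i. unfold vscal. field. lra.
    * intros [y [Hy ->]]. unfold slice. apply Kmem. intros nu s Hne.
      destruct (classic (nu = @vzero n)) as [Enu|Nnu].
      -- rewrite Enu dot_zero_r. rewrite Enu in Hne. have := proj1 (P0_iff t) HP _ s Hne. lra.
      -- rewrite dot_scal_l.
         have := proj1 (Wulff_iff _ Hhh) Hy nu Nnu.
         have := HA (h nu) s (Hhp Nnu). nra.
Qed.
End Part1.

Unset Implicit Arguments.
Close Scope R_scope.

(* N = n + 1 with n = N - 1 >= 1 *)
Theorem mainTheorem1 (n : nat) (Hn : (1 <= n)%N) :
  (forall (f : vec n.+1 -> R) (h : vec n -> R) (phi : R -> R -> R),
     symmetrizable f ->
     lsc_fun h -> nonneg_fun h -> pos_homogeneous h -> convex_fun h ->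
     positive_off_zero h ->
     lsc_fun2 phi -> nonneg_fun2 phi -> convex_fun2 phi ->
     (forall x : vec n.+1, f x = phi (h (xprime x)) (xlast x)) ->
     exists alpha : R -> R,
       (forall t, Rle 0 (alpha t)) /\ concave_on_pos alpha /\
       slices_scaled (Wulff f) (Wulff h) alpha)
  /\
  (forall (f : vec n.+1 -> R),
     lsc_fun f -> convex_fun f -> pos_homogeneous f -> nonneg_fun f ->
     positive_off_zero f ->
     forall (Kh : vec n -> Prop) (alpha : R -> R),
       open_vset Kh -> convex_vset Kh ->
       (forall t, Rle 0 (alpha t)) -> concave_on_pos alpha ->
       slices_scaled (Wulff f) Kh alpha ->
       symmetrizable f).
Proof.
split.
- intros f h phi Hsym Hhl Hhn Hhh Hhc Hhp Hpl Hpn Hpc Hrep.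
  destruct Hsym as [Hfn [Hfc [Hfh [Hfp _]]]].
  eapply part1; eassumption.
- intros f Hl Hc Hh Hnn Hp Kh alpha _ _ Ha0 _ Hsl.
  eapply part2_sym; eassumption.
Qed.
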